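(* Let $n\ge 0$ be an integer, $\alpha_0=-\frac{1}{2n+2}$, and for $k\in\mathbb{Z}_+=\{0,1,2,\dots\}$ let $v_k$ be the even eigenfunction $$v_k(t)=c_k\,e^{-\frac{t^{2n+2}}{2n+2}}L^{(\alpha_0)}_{k}\!\left(\frac{t^{2n+2}}{n+1}\right),$$ with $c_k>0$ chosen so that $\|t^{n}v_k\|_{L^2(\mathbb{R})}=1$. Then for every $k$ the function $v_k$ belongs to the Gel'fand–Shilov space $S^{\frac{1}{2n+2}}_{\frac{2n+1}{2n+2}}(\mathbb{R})$, and moreover there is a constant $C_v>0$ independent of $k,\alpha,\beta$ such that for all $\alpha,\beta\in\mathbb{Z}_+$ and $t\in\mathbb{R}$ $$|t^{\alpha}\partial_t^{\beta}v_k(t)|\le C_v^{\,k+\alpha+\beta+1}\,\alpha!^{\frac{1}{2n+2}}\,\beta!^{\frac{2n+1}{2n+2}}.$$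
   Context: $L^{(a)}_k$ denotes the generalized Laguerre polynomial of degree $k$ and parameter $a$. The functions $v_k$ satisfy $-v_k''+t^{2(2n+1)}v_k=E_k t^{2n}v_k$ with $E_k=4k(n+1)+2n+1$. For $a,b>0$, $S^{a}_{b}(\mathbb{R})$ denotes the set of $f\in C^\infty(\mathbb{R})$ for which there are constants $C,A,B>0$ with $|t^{k}f^{(q)}(t)|\le C A^{k}B^{q}k^{ak}q^{bq}$ for all $k,q\in\mathbb{Z}_+$, $t\in\mathbb{R}$. *)

(* Defs.v *)
From Stdlib Require Import Reals Factorial.
From Coquelicot Require Import Coquelicot.
Open Scope R_scope.

Fixpoint gbinom (x : R) (m : nat) : R :=
  match m with
  | O => 1
  | S m' => gbinom x m' * (x - INR m') / INR (S m')
  end.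

Definition laguerre (a : R) (k : nat) (x : R) : R :=
  sum_f_R0 (fun j => (-1) ^ j * gbinom (INR k + a) (k - j) * x ^ j / INR (fact j)) k.

Definition alpha0 (n : nat) : R := - (1 / (2 * INR n + 2)).

Definition w (n k : nat) (t : R) : R :=
  exp (- (t ^ (2 * n + 2)) / (2 * INR n + 2)) *
  laguerre (alpha0 n) k (t ^ (2 * n + 2) / (INR n + 1)).

(* Gel'fand--Shilov space S^a_b(R), as in the context (k^{ak} read with 0^0 = 1,
   which is what Rpower gives at 0). *)
Definition GelfandShilov (a b : R) (f : R -> R) : Prop :=
  (forall (q : nat) (t : R), ex_derive_n f q t) /\
  exists C A B : R, 0 < C /\ 0 < A /\ 0 < B /\
    forall (k q : nat) (t : R),
      Rabs (t ^ k * Derive_n f q t) <=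
      C * A ^ k * B ^ q * Rpower (INR k) (a * INR k) * Rpower (INR q) (b * INR q).

(* Main.v *)
Require Import Defs.
From Stdlib Require Import Reals Factorial.
From Coquelicot Require Import Coquelicot.
From Stdlib Require Import Lra Lia List.
Open Scope R_scope.

Definition E (n : nat) (t : R) := exp (- (t ^ (2 * n + 2)) / (2 * INR n + 2)).
Definition term := (R * nat)%type.
Definition evT n (x : term) t := fst x * t ^ (snd x) * E n t.
Fixpoint evL n (L : list term) t := match L with nil => 0 | x :: L' => evT n x t + evL n L' t end.
Fixpoint dL n (L : list term) : list term := match L with
 | nil => nil
 | x :: L' => (fst x * INR (snd x), (snd x - 1)%nat) :: (- fst x, (snd x + (2*n+1))%nat) :: dL n L' end.
Fixpoint Dn n b L := match b with O => L | S b' => dL n (Dn n b' L) end.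

Lemma is_derive_evT n x t :
  is_derive (evT n x) t (evT n (fst x * INR (snd x), (snd x - 1)%nat) t + evT n (- fst x, (snd x + (2*n+1))%nat) t).
Proof.
  destruct x as [c p]. unfold evT, E; simpl.
  auto_derive; auto.
  unfold Rdiv. set (X := exp _). change R in t.
  replace (INR (n + (n + 0) + 2)) with (2 * INR n + 2) by (rewrite !plus_INR; simpl; ring).
  replace (Init.Nat.pred (n + (n + 0) + 2)) with (n + (n + 0) + 1)%nat by lia.
  replace (Init.Nat.pred p) with (p - 1)%nat by lia.
  rewrite !pow_add. clearbody X.
  assert (0 < 2 * INR n + 2) by (pose proof (pos_INR n); lra).
  field. lra.
Qed.

Lemma is_derive_evL n L t : is_derive (evL n L) t (evL n (dL n L) t).
Proof.
  induction L as [|x L IH]; cbn [evL dL].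
  - apply (is_derive_ext (fun _ => 0)); [auto|]. apply (is_derive_const (K:=R_AbsRing) 0).
  - apply (is_derive_ext (fun t => evT n x t + evL n L t)); [auto|].
    rewrite <- Rplus_assoc.
    exact (is_derive_plus (evT n x) (evL n L) t _ _ (is_derive_evT n x t) IH).
Qed.

Lemma Derive_n_evL n L b t : Derive_n (evL n L) b t = evL n (Dn n b L) t.
Proof.
  revert t; induction b as [|b IH]; intros t; [reflexivity|].
  simpl. rewrite (Derive_ext _ (evL n (Dn n b L)) t IH).
  apply is_derive_unique, is_derive_evL.
Qed.

Lemma ex_derive_n_evL n L b t : ex_derive_n (evL n L) b t.
Proof.
  destruct b as [|b]; [exact I|]. simpl.
  apply (ex_derive_ext (evL n (Dn n b L))).
  { intros; symmetry; apply Derive_n_evL. }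
  eexists; apply is_derive_evL.
Qed.

Lemma evL_app n A B t : evL n (A ++ B) t = evL n A t + evL n B t.
Proof. induction A; simpl; [ring| rewrite IHA; ring]. Qed.

Lemma dL_app n A B : dL n (A ++ B) = dL n A ++ dL n B.
Proof. induction A; simpl; [reflexivity| rewrite IHA; reflexivity]. Qed.

Lemma Dn_app n b A B : Dn n b (A ++ B) = Dn n b A ++ Dn n b B.
Proof. induction b; simpl; [reflexivity| rewrite IHb, dL_app; reflexivity]. Qed.

Lemma length_dL n L : length (dL n L) = (2 * length L)%nat.
Proof. induction L; simpl; [reflexivity| rewrite IHL; lia]. Qed.

Lemma length_Dn n b L : length (Dn n b L) = (2 ^ b * length L)%nat.
Proof. induction b; simpl; [lia| rewrite length_dL, IHb; lia]. Qed.

Definition good n P b c0 (x : term) :=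
  fst x = 0 \/ exists i, (i <= b)%nat /\ (snd x + b = P + (2*n+2)*i)%nat /\
     Rabs (fst x) <= Rabs c0 * INR (P + (2*n+2)*i) ^ (b - i).

Lemma good_dL n P b c0 L : List.Forall (good n P b c0) L -> List.Forall (good n P (S b) c0) (dL n L).
Proof.
  induction L as [|[c p] L IH]; intros HF; simpl; [constructor|].
  inversion HF as [|? ? Hx HL]; subst.
  specialize (IH HL).
  destruct Hx as [Hc|[i [Hi [Hp Hb]]]]; cbn [fst snd] in *.
  - subst c. constructor; [left; simpl; ring|]. constructor; [left; simpl; ring|]. exact IH.
  - assert (HP0 : 0 <= INR (P + (2*n+2)*i)) by apply pos_INR.
    assert (Hc0 : 0 <= Rabs c0) by apply Rabs_pos.
    constructor.
    + destruct p as [|p].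
      * left; cbn [fst snd]; simpl INR; ring.
      * right; exists i; cbn [fst snd]; split; [lia|split; [lia|]].
        rewrite Rabs_mult, (Rabs_right (INR (S p))) by (apply Rle_ge, pos_INR).
        replace (S b - i)%nat with (S (b - i)) by lia. rewrite <- tech_pow_Rmult.
        assert (INR (S p) <= INR (P + (2*n+2)*i)) by (apply le_INR; lia).
        assert (0 <= INR (P + (2 * n + 2) * i) ^ (b - i)) by (apply pow_le; auto).
        apply Rle_trans with (Rabs c0 * INR (P + (2 * n + 2) * i) ^ (b - i) * INR (S p)).
        { apply Rmult_le_compat_r; [apply pos_INR|exact Hb]. }
        rewrite <- Rmult_assoc.
        set (X := INR (P + (2 * n + 2) * i)) in *. set (Y := X ^ (b - i)) in *.
        rewrite (Rmult_assoc (Rabs c0) Y), (Rmult_assoc (Rabs c0) X).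
        apply Rmult_le_compat_l; [exact Hc0|].
        rewrite (Rmult_comm X Y). apply Rmult_le_compat_l; auto.
    + constructor; [|exact IH].
      right; exists (S i); cbn [fst snd]; split; [lia|split; [lia|]].
      rewrite Rabs_Ropp.
      apply Rle_trans with (1 := Hb).
      apply Rmult_le_compat_l; [exact Hc0|].
      apply pow_incr; split; [exact HP0|]. apply le_INR; lia.
Qed.

Lemma good_Dn n P b c0 : List.Forall (good n P b c0) (Dn n b ((c0, P) :: nil)).
Proof.
  induction b as [|b IH]; simpl.
  - constructor; [|constructor]. right; exists 0%nat; simpl; split; [lia|split;[lia|]].
    replace (P + (2 * n + 2) * 0)%nat with P by lia. simpl. lra.
  - apply good_dL, IH.
Qed.

Lemma sum_ge_last f m : (forall i, 0 <= f i) -> f m <= sum_f_R0 f m.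
Proof.
  intros Hf. destruct m; simpl; [lra|].
  assert (0 <= sum_f_R0 f m) by (apply cond_pos_sum; auto). lra.
Qed.

Lemma pow_fact_le_exp z m : 0 <= z -> z ^ m / INR (fact m) <= exp z.
Proof.
  intros Hz. eapply Rle_trans; [|apply exp_ge_taylor; exact Hz].
  apply (sum_ge_last (fun k => z ^ k / INR (fact k))).
  intros i. apply Rmult_le_pos; [apply pow_le; auto| left; apply Rinv_0_lt_compat, INR_fact_lt_0].
Qed.

Lemma pow_exp_le_fact u m : 0 <= u -> u ^ m * exp (- u) <= INR (fact m).
Proof.
  intros Hu. pose proof (pow_fact_le_exp u m Hu) as H.
  pose proof (INR_fact_lt_0 m). pose proof (exp_pos u).
  assert (u ^ m <= exp u * INR (fact m)).
  { unfold Rdiv in H. apply (Rmult_le_compat_r (INR (fact m))) in H; [|lra].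
    rewrite Rmult_assoc, Rinv_l in H; lra. }
  rewrite exp_Ropp.
  apply (Rmult_le_reg_r (exp u)); auto.
  rewrite Rmult_assoc, Rinv_l by lra. lra.
Qed.

Lemma fact_le_pow m X : INR m <= X -> INR (fact m) <= X ^ m.
Proof.
  induction m as [|m IH]; intros HX; [simpl; lra|].
  replace (fact (S m)) with (S m * fact m)%nat by reflexivity. rewrite mult_INR.
  change (X ^ S m) with (X * X ^ m).
  assert (INR m <= X) by (rewrite S_INR in HX; lra).
  apply Rmult_le_compat; [apply pos_INR|apply pos_INR|exact HX|apply IH; auto].
Qed.

Lemma exp_pow x k : exp x ^ k = exp (INR k * x).
Proof.
  induction k as [|k IH]; simpl; [rewrite Rmult_0_l, exp_0; reflexivity|].
  rewrite IH, <- exp_plus. f_equal. destruct k; simpl; ring.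
Qed.

Lemma INR_N n : INR (2 * n + 2) = 2 * INR n + 2.
Proof. rewrite plus_INR, mult_INR; simpl; ring. Qed.

Lemma powN_abs n t : t ^ (2 * n + 2) = Rabs t ^ (2 * n + 2).
Proof.
  rewrite RPow_abs. symmetry. apply Rabs_right.
  replace (2 * n + 2)%nat with (2 * (n + 1))%nat by lia.
  rewrite pow_mult. apply Rle_ge, pow_le. pose proof (pow2_ge_0 t). lra.
Qed.

Lemma E_pos n t : 0 < E n t.
Proof. apply exp_pos. Qed.

Lemma Y_bound n t m : (Rabs t ^ m * E n t) ^ (2 * n + 2) <= INR (fact m).
Proof.
  rewrite Rpow_mult_distr. unfold E. rewrite exp_pow, INR_N.
  replace ((2 * INR n + 2) * (- t ^ (2 * n + 2) / (2 * INR n + 2))) with (- (t ^ (2*n+2)))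
    by (field; pose proof (pos_INR n); lra).
  rewrite <- pow_mult, Nat.mul_comm, pow_mult, <- powN_abs.
  apply pow_exp_le_fact.
  rewrite powN_abs. apply pow_le, Rabs_pos.
Qed.

Lemma term_pow n P b c0 a x t : good n P b c0 x ->
  (Rabs (t ^ a * evT n x t)) ^ (2 * n + 2) <=
  Rabs c0 ^ (2 * n + 2) * INR (a + P + (2 * n + 2) * b + 1) ^ ((2 * n + 1) * b + a + P).
Proof.
  destruct x as [c p]. unfold evT; cbn [fst snd].
  set (Z := INR (a + P + (2 * n + 2) * b + 1)).
  assert (HZ : 0 <= Z) by apply pos_INR.
  intros [Hc|[i [Hi [Hp Hb]]]]; cbn [fst snd] in *.
  - subst c. rewrite Rmult_0_l, Rmult_0_l, Rmult_0_r, Rabs_R0, pow_i by lia.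
    apply Rmult_le_pos; apply pow_le; auto. apply Rabs_pos.
  - replace (Rabs (t ^ a * (c * t ^ p * E n t))) with (Rabs c * (Rabs t ^ (a + p) * E n t)).
    2:{ rewrite !Rabs_mult, pow_add, (Rabs_right (E n t)) by (apply Rle_ge, Rlt_le, E_pos).
        rewrite <- !RPow_abs. ring. }
    rewrite Rpow_mult_distr.
    set (X := INR (P + (2 * n + 2) * i)) in *.
    assert (HX : 0 <= X) by apply pos_INR.
    assert (HXZ : X <= Z) by (apply le_INR; nia).
    assert (H1 : Rabs c ^ (2 * n + 2) <= Rabs c0 ^ (2 * n + 2) * Z ^ ((b - i) * (2 * n + 2))).
    { rewrite pow_mult, <- Rpow_mult_distr. apply pow_incr; split; [apply Rabs_pos|].
      eapply Rle_trans; [exact Hb|]. apply Rmult_le_compat_l; [apply Rabs_pos|].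
      apply pow_incr; auto. }
    assert (H2 : (Rabs t ^ (a + p) * E n t) ^ (2 * n + 2) <= Z ^ (a + p)).
    { eapply Rle_trans; [apply Y_bound|]. apply fact_le_pow. apply le_INR. nia. }
    replace ((2 * n + 1) * b + a + P)%nat with ((b - i) * (2 * n + 2) + (a + p))%nat by nia.
    rewrite (pow_add Z), <- Rmult_assoc.
    apply Rmult_le_compat; auto.
    + apply pow_le, Rabs_pos.
    + apply pow_le. apply Rmult_le_pos; [apply pow_le, Rabs_pos| left; apply E_pos].
Qed.

Lemma Rpower_pos x y : 0 < Rpower x y.
Proof. unfold Rpower; apply exp_pos. Qed.

Lemma root_le N z y W : (0 < N)%nat -> 0 <= z -> 0 <= y -> 0 < W ->
  z ^ N <= y ^ N * W -> z <= y * Rpower W (1 / INR N).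
Proof.
  intros HN Hz Hy HW H.
  pose proof (Rpower_pos W (1 / INR N)).
  destruct (Req_dec z 0) as [->|Hz0]; [apply Rmult_le_pos; lra|].
  assert (Hzp : 0 < z) by lra.
  destruct (Req_dec y 0) as [->|Hy0].
  { rewrite pow_i in H by lia. pose proof (pow_lt z N Hzp). lra. }
  assert (Hyp : 0 < y) by lra.
  assert (Hq : (z / y) ^ N <= W).
  { unfold Rdiv; rewrite Rpow_mult_distr, pow_inv.
    apply (Rmult_le_reg_r (y ^ N)); [apply pow_lt; auto|].
    rewrite Rmult_assoc, Rinv_l by (apply pow_nonzero; lra). lra. }
  assert (HzW : z / y <= Rpower W (1 / INR N)).
  { assert (HNr : 0 < INR N) by (apply lt_0_INR; lia).
    replace (z / y) with (Rpower ((z / y) ^ N) (1 / INR N)).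
    - apply Rle_Rpower_l; [left; apply Rdiv_lt_0_compat; lra|].
      split; [apply pow_lt, Rdiv_lt_0_compat; lra| exact Hq].
    - rewrite <- Rpower_pow by (apply Rdiv_lt_0_compat; lra).
      rewrite Rpower_mult. replace (INR N * (1 / INR N)) with 1 by (field; lra).
      apply Rpower_1, Rdiv_lt_0_compat; lra. }
  apply (Rmult_le_compat_l y) in HzW; [|lra].
  replace (y * (z / y)) with z in HzW by (field; lra). exact HzW.
Qed.

Lemma pow_le_exp_fact T x : 0 <= T -> T ^ x <= exp T * INR (fact x).
Proof.
  intros HT. pose proof (pow_fact_le_exp T x HT). pose proof (INR_fact_lt_0 x).
  unfold Rdiv in H. apply (Rmult_le_compat_r (INR (fact x))) in H; [|lra].
  rewrite Rmult_assoc, Rinv_l in H; lra.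
Qed.

Definition Wj n a b j :=
  (INR (2 * n + 2) * exp 2) ^ ((2 * n + 2) * (a + b + j + 1)) * INR (fact a) *
  INR (fact b) ^ (2 * n + 1) * INR (fact j) ^ (2 * n + 2).

Lemma comb_le n a b j :
  INR (a + (2 * n + 2) * j + (2 * n + 2) * b + 1) ^ ((2 * n + 1) * b + a + (2 * n + 2) * j) <= Wj n a b j.
Proof.
  set (N := (2 * n + 2)%nat). set (L := (a + b + j)%nat).
  set (T := INR (L + 1)). set (K0 := INR N).
  assert (HT : 0 <= T) by apply pos_INR.
  assert (HK : 1 <= K0) by (unfold K0; replace 1 with (INR 1) by reflexivity; apply le_INR; unfold N; lia).
  assert (HZ : INR (a + N * j + N * b + 1) <= K0 * T).
  { unfold K0, T; rewrite <- mult_INR; apply le_INR. unfold L, N; nia. }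
  eapply Rle_trans.
  { apply pow_incr; split; [apply pos_INR| exact HZ]. }
  rewrite Rpow_mult_distr.
  assert (HKe : K0 ^ ((2 * n + 1) * b + a + N * j) <= K0 ^ (N * (L + 1))).
  { apply Rle_pow; auto. unfold N, L; nia. }
  assert (HTe : T ^ ((2 * n + 1) * b + a + N * j) <=
     exp 2 ^ (N * (L + 1)) * INR (fact a) * INR (fact b) ^ (2 * n + 1) * INR (fact j) ^ N).
  { replace (T ^ ((2 * n + 1) * b + a + N * j)) with ((T ^ b) ^ (2 * n + 1) * T ^ a * (T ^ j) ^ N)
      by (rewrite <- !pow_mult, <- !pow_add; f_equal; ring).
    pose proof (pow_le_exp_fact T a HT). pose proof (pow_le_exp_fact T b HT).
    pose proof (pow_le_exp_fact T j HT).
    assert (E1 : (T ^ b) ^ (2 * n + 1) <= (exp T * INR (fact b)) ^ (2 * n + 1))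
      by (apply pow_incr; split; [apply pow_le; auto| auto]).
    assert (E2 : (T ^ j) ^ N <= (exp T * INR (fact j)) ^ N)
      by (apply pow_incr; split; [apply pow_le; auto| auto]).
    eapply Rle_trans.
    { apply Rmult_le_compat; [apply Rmult_le_pos; apply pow_le; try apply pow_le; auto
                              | apply pow_le, pow_le; auto | | exact E2].
      apply Rmult_le_compat; [apply pow_le, pow_le; auto|apply pow_le; auto| exact E1| eauto]. }
    rewrite !Rpow_mult_distr.
    replace (exp 2 ^ (N * (L + 1))) with
      (exp T ^ (2 * n + 1) * exp T * exp T ^ N).
    - apply Req_le; ring.
    - rewrite !exp_pow, <- !exp_plus. f_equal. unfold T, N.
      rewrite !mult_INR, !plus_INR, !mult_INR. simpl. ring. }
  replace (Wj n a b j) with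
   (K0 ^ (N * (L + 1)) * (exp 2 ^ (N * (L + 1)) * INR (fact a) * INR (fact b) ^ (2 * n + 1) * INR (fact j) ^ N)).
  2:{ unfold Wj, K0, N, L. rewrite Rpow_mult_distr. ring. }
  apply Rmult_le_compat; auto; apply pow_le; lra.
Qed.

Lemma Rpower_powk x k y : 0 < x -> Rpower (x ^ k) y = Rpower x (INR k * y).
Proof. intros Hx. rewrite <- Rpower_pow by auto. apply Rpower_mult. Qed.

Definition GG n := INR (2 * n + 2) * exp 2.
Definition AA n a := Rpower (INR (fact a)) (1 / (2 * INR n + 2)).
Definition BB n b := Rpower (INR (fact b)) ((2 * INR n + 1) / (2 * INR n + 2)).

Lemma GG_ge1 n : 1 <= GG n.
Proof.
  unfold GG. rewrite INR_N. pose proof (pos_INR n).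
  assert (1 <= exp 2) by (pose proof (exp_ineq1 2); lra).
  replace 1 with (1 * 1) by ring. apply Rmult_le_compat; lra.
Qed.

Lemma Wj_pos n a b j : 0 < Wj n a b j.
Proof.
  unfold Wj. pose proof (GG_ge1 n). unfold GG in H.
  repeat apply Rmult_lt_0_compat; try apply pow_lt; try apply INR_fact_lt_0; lra.
Qed.

Lemma Wj_root n a b j :
  Rpower (Wj n a b j) (1 / INR (2 * n + 2)) = GG n ^ (a + b + j + 1) * AA n a * BB n b * INR (fact j).
Proof.
  pose proof (GG_ge1 n) as HG. unfold GG in HG.
  pose proof (INR_fact_lt_0 a). pose proof (INR_fact_lt_0 b). pose proof (INR_fact_lt_0 j).
  assert (HN : 0 < 2 * INR n + 2) by (pose proof (pos_INR n); lra).
  unfold Wj. rewrite <- !Rpower_mult_distr;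
    try (repeat apply Rmult_lt_0_compat); try apply pow_lt; try lra.
  rewrite !Rpower_powk by lra. rewrite INR_N.
  replace (INR ((2 * n + 2) * (a + b + j + 1)) * (1 / (2 * INR n + 2))) with (INR (a + b + j + 1))
    by (rewrite mult_INR, INR_N; field; lra).
  rewrite Rpower_pow by (apply Rmult_lt_0_compat; [lra| apply exp_pos]).
  unfold GG, AA, BB. rewrite INR_N.
  replace (INR (2 * n + 1) * (1 / (2 * INR n + 2))) with ((2 * INR n + 1) / (2 * INR n + 2))
    by (rewrite plus_INR, mult_INR; simpl; field; lra).
  replace ((2 * INR n + 2) * (1 / (2 * INR n + 2))) with 1 by (field; lra).
  rewrite Rpower_1 by lra. reflexivity.
Qed.

Lemma list_bound n a L t Bd : (forall x, In x L -> Rabs (t ^ a * evT n x t) <= Bd) ->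
  Rabs (t ^ a * evL n L t) <= INR (length L) * Bd.
Proof.
  induction L as [|x L IH]; intros H; cbn [evL length].
  - rewrite Rmult_0_r, Rabs_R0. simpl; lra.
  - rewrite S_INR, Rmult_plus_distr_l.
    eapply Rle_trans; [apply Rabs_triang|].
    assert (Rabs (t ^ a * evT n x t) <= Bd) by (apply H; left; auto).
    assert (Rabs (t ^ a * evL n L t) <= INR (length L) * Bd) by (apply IH; intros; apply H; right; auto).
    lra.
Qed.

Lemma single_bound n a b j c0 t :
  Rabs (t ^ a * evL n (Dn n b ((c0, ((2 * n + 2) * j)%nat) :: nil)) t) <=
  2 ^ b * (Rabs c0 * (GG n ^ (a + b + j + 1) * AA n a * BB n b * INR (fact j))).
Proof.
  rewrite <- Wj_root.
  replace (2 ^ b) with (INR (length (Dn n b ((c0, ((2 * n + 2) * j)%nat) :: nil)))).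
  2:{ rewrite length_Dn. simpl length. rewrite Nat.mul_1_r, pow_INR. reflexivity. }
  apply list_bound. intros x Hx.
  pose proof (proj1 (List.Forall_forall _ _) (good_Dn n ((2 * n + 2) * j) b c0) x Hx) as Hg.
  apply root_le; [lia|apply Rabs_pos|apply Rabs_pos|apply Wj_pos|].
  eapply Rle_trans; [apply (term_pow _ _ _ _ a _ t Hg)|].
  apply Rmult_le_compat_l; [apply pow_le, Rabs_pos|].
  replace (a + (2 * n + 2) * j + (2 * n + 2) * b + 1)%nat with (a + (2 * n + 2) * j + (2 * n + 2) * b + 1)%nat by reflexivity.
  apply comb_le.
Qed.

Lemma alpha0_bounds n : -(1/2) <= alpha0 n < 0.
Proof.
  unfold alpha0. pose proof (pos_INR n).
  split.
  - apply Ropp_le_contravar. apply Rmult_le_reg_r with (2 * INR n + 2); [lra|].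
    unfold Rdiv. rewrite Rmult_1_l, Rinv_l by lra. nra.
  - apply Ropp_lt_gt_0_contravar. apply Rdiv_lt_0_compat; lra.
Qed.

Lemma gbinom_upper n k m : (m <= k)%nat ->
  Rabs (gbinom (INR k + alpha0 n) m) <= INR k ^ m / INR (fact m).
Proof.
  pose proof (alpha0_bounds n) as [Ha1 Ha2].
  induction m as [|m IH]; intros Hm.
  - simpl. rewrite Rabs_R1. lra.
  - cbn [gbinom]. unfold Rdiv.
    rewrite !Rabs_mult, Rabs_inv.
    assert (Hm' : (m < k)%nat) by lia.
    assert (HmR : INR m + 1 <= INR k) by (rewrite <- S_INR; apply le_INR; lia).
    assert (Hx : Rabs (INR k + alpha0 n - INR m) <= INR k).
    { pose proof (pos_INR m). rewrite Rabs_right by lra. lra. }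
    rewrite (Rabs_right (INR (S m))) by (apply Rle_ge, pos_INR).
    replace (fact (S m)) with (S m * fact m)%nat by reflexivity.
    rewrite mult_INR, Rinv_mult. simpl pow.
    assert (0 < INR (S m)) by (apply lt_0_INR; lia).
    pose proof (INR_fact_lt_0 m).
    specialize (IH ltac:(lia)). unfold Rdiv in IH.
    replace (INR k * INR k ^ m * (/ INR (S m) * / INR (fact m)))
      with ((INR k ^ m * / INR (fact m)) * INR k * / INR (S m)) by ring.
    apply Rmult_le_compat_r; [left; apply Rinv_0_lt_compat; lra|].
    apply Rmult_le_compat; auto; apply Rabs_pos.
Qed.

Lemma gbinom_exp n k m : (m <= k)%nat -> Rabs (gbinom (INR k + alpha0 n) m) <= exp (INR k).
Proof.
  intros Hm. eapply Rle_trans; [apply gbinom_upper; auto|]. apply pow_fact_le_exp, pos_INR.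
Qed.

Lemma gbinom_nat k m : (m <= k)%nat ->
  gbinom (INR k) m * INR (fact m) * INR (fact (k - m)) = INR (fact k).
Proof.
  induction m as [|m IH]; intros Hm.
  - simpl. rewrite Nat.sub_0_r. ring.
  - cbn [gbinom]. rewrite <- IH by lia.
    replace (fact (S m)) with (S m * fact m)%nat by reflexivity.
    replace (k - m)%nat with (S (k - S m)) by lia.
    replace (fact (S (k - S m))) with (S (k - S m) * fact (k - S m))%nat by reflexivity.
    rewrite !mult_INR.
    replace (INR (S (k - S m))) with (INR k - INR m) by (rewrite S_INR, minus_INR by lia; rewrite S_INR; ring).
    assert (0 < INR (S m)) by (apply lt_0_INR; lia).
    field. lra.
Qed.

Lemma gbinom_nat_pos k m : (m <= k)%nat -> 0 < gbinom (INR k) m.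
Proof.
  intros Hm. pose proof (gbinom_nat k m Hm).
  pose proof (INR_fact_lt_0 m). pose proof (INR_fact_lt_0 (k - m)). pose proof (INR_fact_lt_0 k).
  destruct (Rlt_or_le 0 (gbinom (INR k) m)) as [h|h]; auto.
  exfalso. assert (gbinom (INR k) m * INR (fact m) <= 0) by nra. nra.
Qed.

Lemma gbinom_lower n k m : (m <= k)%nat ->
  (1/2) ^ m * gbinom (INR k) m <= gbinom (INR k + alpha0 n) m.
Proof.
  pose proof (alpha0_bounds n) as [Ha1 Ha2].
  induction m as [|m IH]; intros Hm.
  - simpl. lra.
  - cbn [gbinom]. specialize (IH ltac:(lia)).
    pose proof (gbinom_nat_pos k m ltac:(lia)) as Hp.
    assert (HmR : INR m + 1 <= INR k) by (rewrite <- S_INR; apply le_INR; lia).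
    assert (0 < INR (S m)) by (apply lt_0_INR; lia).
    replace ((1 / 2) ^ S m * (gbinom (INR k) m * (INR k - INR m) / INR (S m)))
      with (((1/2) ^ m * gbinom (INR k) m) * ((INR k - INR m) / 2) * / INR (S m)) by (rewrite <- tech_pow_Rmult; field; lra).
    unfold Rdiv at 3.
    apply Rmult_le_compat_r; [left; apply Rinv_0_lt_compat; lra|].
    apply Rmult_le_compat; auto.
    + apply Rmult_le_pos; [apply pow_le; lra| lra].
    + lra.
    + lra.
Qed.

Lemma gbinom_k_lower n k : (1/2) ^ k <= gbinom (INR k + alpha0 n) k.
Proof.
  eapply Rle_trans; [|apply gbinom_lower; lia].
  pose proof (gbinom_nat k k (Nat.le_refl k)). rewrite Nat.sub_diag in H. simpl (fact 0) in H.
  pose proof (INR_fact_lt_0 k).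
  assert (gbinom (INR k) k = 1).
  { apply Rmult_eq_reg_r with (INR (fact k)); [|lra]. simpl INR in H. lra. }
  rewrite H1. lra.
Qed.

Definition beta n k j := (-1) ^ j * gbinom (INR k + alpha0 n) (k - j) / INR (fact j) / (INR n + 1) ^ j.
Fixpoint mk (f : nat -> term) k := match k with O => f O :: nil | S k' => f (S k') :: mk f k' end.
Definition L0 n k ck := mk (fun j => (ck * beta n k j, ((2 * n + 2) * j)%nat)) k.

Lemma evL_mk n f k t : evL n (mk f k) t = sum_f_R0 (fun j => evT n (f j) t) k.
Proof. induction k; cbn [mk evL sum_f_R0]; [ring| rewrite IHk; ring]. Qed.

Lemma Dn_mk n b f k t : evL n (Dn n b (mk f k)) t = sum_f_R0 (fun j => evL n (Dn n b (f j :: nil)) t) k.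
Proof.
  induction k; cbn [mk sum_f_R0]; [reflexivity|].
  change (f (S k) :: mk f k) with ((f (S k) :: nil) ++ mk f k).
  rewrite Dn_app, evL_app, IHk. ring.
Qed.

Lemma w_evL n k ck t : ck * w n k t = evL n (L0 n k ck) t.
Proof.
  unfold L0. rewrite evL_mk. unfold w, laguerre.
  rewrite scal_sum, scal_sum. apply sum_eq. intros j Hj.
  unfold evT, beta, E; cbn [fst snd].
  unfold Rdiv. rewrite Rpow_mult_distr, pow_inv, <- pow_mult.
  assert (0 < INR n + 1) by (pose proof (pos_INR n); lra).
  pose proof (INR_fact_lt_0 j).
  assert (0 < (INR n + 1) ^ j) by (apply pow_lt; lra).
  field. lra.
Qed.

Lemma main_bound n k ck a b t : 0 <= ck ->
  Rabs (t ^ a * Derive_n (fun t => ck * w n k t) b t) <=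
  INR (S k) * (2 ^ b * (ck * exp (INR k) * (GG n ^ (a + b + k + 1) * AA n a * BB n b))).
Proof.
  intros Hck.
  rewrite (Derive_n_ext _ (evL n (L0 n k ck))) by (intros; apply w_evL).
  rewrite Derive_n_evL. unfold L0. rewrite Dn_mk, scal_sum.
  eapply Rle_trans; [apply Rsum_abs|].
  rewrite (Rmult_comm (INR (S k))), <- sum_cte. apply sum_Rle. intros j Hj.
  rewrite Rmult_comm. eapply Rle_trans; [apply single_bound|].
  apply Rmult_le_compat_l; [apply pow_le; lra|].
  pose proof (GG_ge1 n) as HG.
  assert (HA : 0 <= AA n a) by (left; apply Rpower_pos).
  assert (HB : 0 <= BB n b) by (left; apply Rpower_pos).
  pose proof (INR_fact_lt_0 j) as Hf.
  assert (Hbeta : Rabs (beta n k j) * INR (fact j) <= exp (INR k)).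
  { unfold beta, Rdiv. rewrite !Rabs_mult, Rabs_inv, Rabs_inv, <- RPow_abs, Rabs_m1, pow1.
    rewrite (Rabs_right (INR (fact j))) by lra.
    assert (Hn : 1 <= Rabs (INR n + 1) ^ j).
    { apply pow_R1_Rle. pose proof (pos_INR n). rewrite Rabs_right; lra. }
    pose proof (gbinom_exp n k (k - j) ltac:(lia)).
    rewrite RPow_abs in Hn.
    set (g := Rabs (gbinom (INR k + alpha0 n) (k - j))) in *.
    set (q := Rabs ((INR n + 1) ^ j)) in *.
    assert (0 <= g) by apply Rabs_pos.
    replace (1 * g * / INR (fact j) * / q * INR (fact j)) with (g * / q) by (field; split; lra).
    apply Rle_trans with (g * 1); [|lra].
    apply Rmult_le_compat_l; auto.
    rewrite <- Rinv_1. apply Rinv_le_contravar; lra. }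
  assert (HGp : GG n ^ (a + b + j + 1) <= GG n ^ (a + b + k + 1)) by (apply Rle_pow; auto; lia).
  rewrite Rabs_mult, (Rabs_right ck) by lra.
  replace (ck * Rabs (beta n k j) * (GG n ^ (a + b + j + 1) * AA n a * BB n b * INR (fact j)))
    with (ck * (Rabs (beta n k j) * INR (fact j)) * (GG n ^ (a + b + j + 1) * AA n a * BB n b)) by ring.
  apply Rmult_le_compat.
  - apply Rmult_le_pos; [lra|]. apply Rmult_le_pos; [apply Rabs_pos|lra].
  - apply Rmult_le_pos; [apply Rmult_le_pos|auto]; [apply pow_le; lra|auto].
  - apply Rmult_le_compat_l; auto.
  - apply Rmult_le_compat_r; auto. apply Rmult_le_compat_r; auto.
Qed.

Lemma rint_gen_lower (Fn : R -> R) l lo hi m : lo < hi -> (forall x, 0 <= Fn x) ->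
  (forall x, lo <= x <= hi -> m <= Fn x) ->
  is_RInt_gen Fn (Rbar_locally m_infty) (Rbar_locally p_infty) l -> (hi - lo) * m <= l + 1.
Proof.
  intros Hlh Hpos Hm H.
  assert (H1 : 0 < 1) by lra.
  specialize (H (ball l (mkposreal 1 H1)) (locally_ball l (mkposreal 1 H1))).
  unfold filtermapi in H.
  destruct H as [Q R0 HQ HR Hprod].
  destruct HQ as [M HM]. destruct HR as [M' HM'].
  set (a := Rmin M lo - 1). set (b := Rmax M' hi + 1).
  assert (Ha : a < M) by (unfold a; pose proof (Rmin_l M lo); lra).
  assert (Hb : M' < b) by (unfold b; pose proof (Rmax_l M' hi); lra).
  assert (Hal : a <= lo) by (unfold a; pose proof (Rmin_r M lo); lra).
  assert (Hhb : hi <= b) by (unfold b; pose proof (Rmax_r M' hi); lra).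
  destruct (Hprod a b (HM a Ha) (HM' b Hb)) as [y [Hy Hball]].
  cbn [fst snd] in Hy. change (is_RInt (V:=R_CompleteNormedModule) Fn a b y) in Hy.
  assert (Hyl : y < l + 1).
  { change (Rabs (y - l) < 1) in Hball. apply Rabs_def2 in Hball. lra. }
  assert (Hex : ex_RInt Fn a b) by (exists y; exact Hy).
  assert (Hy2 : RInt Fn a b = y) by (apply is_RInt_unique; exact Hy).
  assert (E1 : ex_RInt Fn a lo) by (apply (ex_RInt_Chasles_1 (V:=R_CompleteNormedModule) _ a lo b); [lra|auto]).
  assert (E2 : ex_RInt Fn lo b) by (apply (ex_RInt_Chasles_2 (V:=R_CompleteNormedModule) _ a lo b); [lra|auto]).
  assert (E3 : ex_RInt Fn lo hi) by (apply (ex_RInt_Chasles_1 (V:=R_CompleteNormedModule) _ lo hi b); [lra|auto]).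
  assert (E4 : ex_RInt Fn hi b) by (apply (ex_RInt_Chasles_2 (V:=R_CompleteNormedModule) _ lo hi b); [lra|auto]).
  pose proof (RInt_Chasles (V:=R_CompleteNormedModule) Fn a lo b E1 E2) as C1.
  pose proof (RInt_Chasles (V:=R_CompleteNormedModule) Fn lo hi b E3 E4) as C2.
  change plus with Rplus in C1, C2.
  assert (0 <= RInt Fn a lo) by (apply RInt_ge_0; auto).
  assert (0 <= RInt Fn hi b) by (apply RInt_ge_0; auto).
  assert (RInt (fun _ => m) lo hi <= RInt Fn lo hi).
  { apply RInt_le; auto; [lra| apply ex_RInt_const|]. intros x Hx; apply Hm; lra. }
  rewrite RInt_const in H2. change scal with Rmult in H2. simpl in H2.
  lra.
Qed.

Lemma pow_le1 y j : 0 <= y <= 1 -> y ^ j <= 1.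
Proof.
  intros Hy. induction j; simpl; [lra|].
  replace 1 with (1 * 1) by ring. apply Rmult_le_compat; try lra. apply pow_le; lra.
Qed.

Lemma pow_le_self y j : 0 <= y <= 1 -> (1 <= j)%nat -> y ^ j <= y.
Proof.
  intros Hy Hj. destruct j; [lia|]. simpl.
  pose proof (pow_le1 y j Hy). apply Rle_trans with (y * 1); [|lra].
  apply Rmult_le_compat_l; lra.
Qed.

Lemma exp_le_mono x y : x <= y -> exp x <= exp y.
Proof. intros [H|H]; [left; apply exp_increasing; auto| subst; lra]. Qed.

Lemma sum_minus_first f k Bd : (forall j, (1 <= j <= k)%nat -> Rabs (f j) <= Bd) ->
  Rabs (sum_f_R0 f k - f 0%nat) <= INR k * Bd.
Proof.
  induction k as [|k IH]; intros H.
  - simpl. replace (f 0%nat - f 0%nat) with 0 by ring. rewrite Rabs_R0. lra.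
  - cbn [sum_f_R0]. replace (sum_f_R0 f k + f (S k) - f 0%nat) with ((sum_f_R0 f k - f 0%nat) + f (S k)) by ring.
    eapply Rle_trans; [apply Rabs_triang|].
    rewrite S_INR.
    assert (Rabs (sum_f_R0 f k - f 0%nat) <= INR k * Bd) by (apply IH; intros; apply H; lia).
    assert (Rabs (f (S k)) <= Bd) by (apply H; lia). lra.
Qed.

Definition hk k := (1/2) ^ (k + 1) / (INR (S k) * exp (INR k)).

Lemma hk_pos k : 0 < hk k.
Proof.
  unfold hk. apply Rdiv_lt_0_compat; [apply pow_lt; lra|].
  apply Rmult_lt_0_compat; [apply lt_0_INR; lia| apply exp_pos].
Qed.

Lemma hk_le1 k : hk k <= 1.
Proof.
  unfold hk. pose proof (pow_le1 (1/2) (k+1) ltac:(lra)).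
  assert (1 <= INR (S k)) by (replace 1 with (INR 1) by reflexivity; apply le_INR; lia).
  assert (1 <= exp (INR k)) by (pose proof (exp_ineq1_le (INR k)); pose proof (pos_INR k); lra).
  apply Rmult_le_reg_r with (INR (S k) * exp (INR k)); [nra|].
  unfold Rdiv. rewrite Rmult_assoc, Rinv_l by nra. pose proof (pow_le (1/2) (k+1) ltac:(lra)). nra.
Qed.

Lemma w_lower n k t : 0 <= t <= hk k -> exp (-1) * (1/2) ^ (k + 1) <= w n k t.
Proof.
  intros Ht. pose proof (hk_le1 k). pose proof (hk_pos k).
  assert (Ht1 : 0 <= t <= 1) by lra.
  pose proof (pos_INR n) as Hn.
  set (y := t ^ (2 * n + 2) / (INR n + 1)).
  assert (HtN : 0 <= t ^ (2 * n + 2) <= t) by (split; [apply pow_le; lra| apply pow_le_self; [lra|lia]]).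
  assert (Hy : 0 <= y <= t).
  { unfold y. split; [apply Rdiv_le_0_compat; lra|].
    apply Rmult_le_reg_r with (INR n + 1); [lra|]. unfold Rdiv.
    rewrite Rmult_assoc, Rinv_l by lra. nra. }
  unfold w. fold y.
  assert (HE : exp (-1) <= exp (- t ^ (2 * n + 2) / (2 * INR n + 2))).
  { apply exp_le_mono. apply Rmult_le_reg_r with (2 * INR n + 2); [lra|].
    unfold Rdiv. rewrite Rmult_assoc, Rinv_l by lra. nra. }
  assert (HL : (1/2) ^ (k + 1) <= laguerre (alpha0 n) k y).
  { unfold laguerre.
    set (f := fun j => (-1) ^ j * gbinom (INR k + alpha0 n) (k - j) * y ^ j / INR (fact j)).
    assert (Hf0 : f 0%nat = gbinom (INR k + alpha0 n) k).
    { unfold f. rewrite Nat.sub_0_r. simpl. field. }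
    assert (Hb : forall j, (1 <= j <= k)%nat -> Rabs (f j) <= exp (INR k) * t).
    { intros j Hj. unfold f, Rdiv. rewrite !Rabs_mult, <- RPow_abs, Rabs_m1, pow1.
      pose proof (INR_fact_lt_0 j).
      rewrite Rabs_inv, (Rabs_right (INR (fact j))) by lra.
      rewrite <- RPow_abs, (Rabs_right y) by lra.
      assert (Hyj : y ^ j <= t) by (eapply Rle_trans; [apply pow_le_self; [lra|lia]|lra]).
      assert (Hfj : / INR (fact j) <= 1).
      { rewrite <- Rinv_1. apply Rinv_le_contravar; [lra|].
        replace 1 with (INR 1) by reflexivity. apply le_INR. pose proof (lt_O_fact j). lia. }
      pose proof (gbinom_exp n k (k - j) ltac:(lia)).
      pose proof (pow_le y j ltac:(lra)).
      assert (0 < / INR (fact j)) by (apply Rinv_0_lt_compat; lra).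
      rewrite Rmult_1_l.
      apply Rle_trans with (exp (INR k) * t * 1); [|lra].
      apply Rmult_le_compat; try lra.
      - apply Rmult_le_pos; auto; apply Rabs_pos.
      - apply Rmult_le_compat; auto; apply Rabs_pos. }
    pose proof (sum_minus_first f k _ Hb) as Hs.
    pose proof (Rle_abs (- (sum_f_R0 f k - f 0%nat))) as Hs2. rewrite Rabs_Ropp in Hs2.
    pose proof (gbinom_k_lower n k).
    assert (Hkt : INR k * (exp (INR k) * t) <= (1/2) ^ (k + 1)).
    { apply Rle_trans with (INR k * (exp (INR k) * hk k)).
      - apply Rmult_le_compat_l; [apply pos_INR|]. apply Rmult_le_compat_l; [left; apply exp_pos|lra].
      - unfold hk. rewrite S_INR. pose proof (exp_pos (INR k)). pose proof (pos_INR k).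
        pose proof (pow_lt (1/2) (k+1) ltac:(lra)).
        replace (INR k * (exp (INR k) * ((1 / 2) ^ (k + 1) / ((INR k + 1) * exp (INR k)))))
          with ((1/2) ^ (k+1) * (INR k / (INR k + 1))) by (field; lra).
        rewrite <- (Rmult_1_r ((1/2) ^ (k+1))) at 2.
        apply Rmult_le_compat_l; [lra|].
        apply Rmult_le_reg_r with (INR k + 1); [lra|]. unfold Rdiv.
        rewrite Rmult_assoc, Rinv_l by lra. lra. }
    assert (Hhalf : (1/2) ^ (k + 1) = (1/2) ^ k - (1/2) ^ (k + 1))
      by (rewrite Nat.add_1_r; simpl; field).
    change (Rabs (sum_f_R0 f k - f 0%nat) <= INR k * (exp (INR k) * t)) in Hs.
    change (f 0%nat = gbinom (INR k + alpha0 n) k) in Hf0.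
    lra. }
  apply Rmult_le_compat; auto.
  - left; apply exp_pos.
  - apply pow_le; lra.
Qed.

Lemma succ_le_pow2 k : INR (S k) <= 2 ^ k.
Proof.
  induction k; [simpl; lra|]. rewrite S_INR, <- tech_pow_Rmult.
  assert (1 <= 2 ^ k) by (apply pow_R1_Rle; lra). lra.
Qed.

Definition QQ n := 3 * exp 2 * 4 * (4 * exp 1) ^ (2 * n + 1).

Lemma exp1_ge1 : 1 <= exp 1.
Proof. pose proof (exp_ineq1_le 1). lra. Qed.

Lemma QQ_ge1 n : 1 <= QQ n.
Proof.
  unfold QQ. pose proof exp1_ge1. assert (1 <= exp 2) by (pose proof (exp_ineq1_le 2); lra).
  assert (1 <= (4 * exp 1) ^ (2 * n + 1)) by (apply pow_R1_Rle; lra).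
  assert (1 <= 3 * exp 2 * 4) by nra. nra.
Qed.

Lemma inv_hk k : 2 / hk k <= (4 * exp 1) ^ (k + 1).
Proof.
  unfold hk. pose proof (exp_pos (INR k)). pose proof (succ_le_pow2 k).
  assert (0 < INR (S k)) by (apply lt_0_INR; lia).
  assert (0 < (1/2) ^ (k + 1)) by (apply pow_lt; lra).
  replace (2 / ((1 / 2) ^ (k + 1) / (INR (S k) * exp (INR k))))
    with (2 * 2 ^ (k + 1) * INR (S k) * exp (INR k)).
  2:{ replace (1/2) with (/2) by field. rewrite pow_inv. field.
      split; [apply pow_nonzero; lra|split; lra]. }
  rewrite Rpow_mult_distr.
  replace (exp 1 ^ (k + 1)) with (exp (INR k) * exp 1) by
    (rewrite exp_pow, <- exp_plus; f_equal; rewrite plus_INR; simpl; ring).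
  replace (4 ^ (k + 1)) with (2 * 2 ^ (k+1) * 2 ^ k).
  2:{ replace 4 with (2 * 2) by ring. rewrite Rpow_mult_distr, pow_add. simpl. ring. }
  pose proof exp1_ge1. pose proof (pow_lt 2 (k+1) ltac:(lra)).
  assert (0 <= 2 * 2 ^ (k + 1) * INR (S k) * exp (INR k)) by (repeat apply Rmult_le_pos; lra).
  replace (2 * 2 ^ (k + 1) * INR (S k) * exp (INR k)) with (2 * 2 ^ (k + 1) * exp (INR k) * INR (S k)) by ring.
  replace (2 * 2 ^ (k + 1) * 2 ^ k * (exp (INR k) * exp 1)) with (2 * 2 ^ (k + 1) * exp (INR k) * (2 ^ k * exp 1)) by ring.
  apply Rmult_le_compat_l; [repeat apply Rmult_le_pos; lra|].
  nra.
Qed.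

Lemma ck_bound n k ck : 0 < ck ->
  is_RInt_gen (fun t => (t ^ n * (ck * w n k t)) ^ 2) (Rbar_locally m_infty) (Rbar_locally p_infty) 1 ->
  ck <= QQ n ^ (k + 1).
Proof.
  intros Hck Hint.
  set (h := hk k). pose proof (hk_pos k) as Hh. fold h in Hh.
  set (c1 := exp (-1) * (1/2) ^ (k + 1)).
  assert (Hc1 : 0 < c1) by (unfold c1; apply Rmult_lt_0_compat; [apply exp_pos| apply pow_lt; lra]).
  pose proof (rint_gen_lower (fun t => (t ^ n * (ck * w n k t)) ^ 2) 1 (h/2) h (((h/2) ^ n * (ck * c1)) ^ 2) ltac:(lra)
    (fun x => pow2_ge_0 (x ^ n * (ck * w n k x)))) as Hr.
  assert (Hm : forall x, h / 2 <= x <= h -> ((h/2) ^ n * (ck * c1)) ^ 2 <= (x ^ n * (ck * w n k x)) ^ 2).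
  { intros x Hx. pose proof (w_lower n k x ltac:(unfold h in Hx; lra)) as Hw. fold c1 in Hw.
    apply pow_incr. split; [apply Rmult_le_pos; [apply pow_le; lra| nra]|].
    apply Rmult_le_compat; [apply pow_le; lra| nra | apply pow_incr; lra| nra]. }
  specialize (Hr Hm Hint).
  set (u := 2 / h).
  assert (Hu : 0 < u) by (unfold u; apply Rdiv_lt_0_compat; lra).
  assert (Hhu : h / 2 * u = 1) by (unfold u; field; lra).
  assert (Hck2 : ck ^ 2 <= 2 * u ^ (2 * n + 1) * exp 1 ^ 2 * 4 ^ (k + 1)).
  { replace ((h - h / 2) * ((h / 2) ^ n * (ck * c1)) ^ 2)
      with (ck ^ 2 * ((h/2) ^ (2 * n + 1) * c1 ^ 2)) in Hr.
    2:{ rewrite !Rpow_mult_distr. replace (h - h/2) with (h/2) by field.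
        replace (2 * n + 1)%nat with (S (n * 2)) by lia. rewrite <- pow_mult. simpl. ring. }
    assert (Hinv : ((h/2) ^ (2 * n + 1) * c1 ^ 2) * (u ^ (2 * n + 1) * exp 1 ^ 2 * 4 ^ (k + 1)) = 1).
    { unfold c1. rewrite !Rpow_mult_distr.
      replace (((h / 2) ^ (2 * n + 1) * (exp (-1) ^ 2 * ((1 / 2) ^ (k + 1)) ^ 2)) *
        (u ^ (2 * n + 1) * exp 1 ^ 2 * 4 ^ (k + 1)))
      with ((h / 2 * u) ^ (2 * n + 1) * (exp (-1) * exp 1) ^ 2 * ((1/2) * (1/2) * 4) ^ (k + 1)).
      2:{ rewrite !Rpow_mult_distr. ring. }
      rewrite Hhu, <- exp_plus. replace (-1 + 1) with 0 by ring. rewrite exp_0.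
      replace (1 / 2 * (1 / 2) * 4) with 1 by field. rewrite !pow1. ring. }
    assert (0 < u ^ (2 * n + 1) * exp 1 ^ 2 * 4 ^ (k + 1)).
    { pose proof (exp_pos 1). apply Rmult_lt_0_compat; [apply Rmult_lt_0_compat|]; apply pow_lt; lra. }
    apply (Rmult_le_compat_r (u ^ (2 * n + 1) * exp 1 ^ 2 * 4 ^ (k + 1))) in Hr; [|lra].
    rewrite Rmult_assoc, Hinv, Rmult_1_r in Hr. lra. }
  assert (Hu2 : u ^ (2 * n + 1) <= ((4 * exp 1) ^ (2 * n + 1)) ^ (k + 1)).
  { eapply Rle_trans; [apply pow_incr; split; [lra| apply inv_hk]|]. rewrite <- !pow_mult, Nat.mul_comm. lra. }
  assert (Hck1 : ck <= 1 + ck ^ 2) by nra.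
  pose proof exp1_ge1.
  set (R1 := (4 * exp 1) ^ (2 * n + 1)).
  assert (HR1 : 1 <= R1) by (apply pow_R1_Rle; lra).
  assert (H4 : 1 <= 4 ^ (k + 1)) by (apply pow_R1_Rle; lra).
  assert (HR1k : 1 <= R1 ^ (k + 1)) by (apply pow_R1_Rle; lra).
  assert (He2 : exp 1 ^ 2 = exp 2) by (rewrite exp_pow; simpl; f_equal; ring).
  assert (He2' : 1 <= exp 2) by (pose proof (exp_ineq1_le 2); lra).
  assert (H3 : 3 * exp 2 <= (3 * exp 2) ^ (k + 1)).
  { replace (k + 1)%nat with (S k) by lia. simpl. rewrite <- (Rmult_1_r (3 * exp 2)) at 1.
    apply Rmult_le_compat_l; [lra|]. apply pow_R1_Rle. lra. }
  replace (QQ n ^ (k + 1)) with ((3 * exp 2) ^ (k + 1) * 4 ^ (k + 1) * R1 ^ (k + 1))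
    by (unfold QQ, R1; rewrite !Rpow_mult_distr; ring).
  apply Rle_trans with (3 * exp 2 * 4 ^ (k + 1) * R1 ^ (k + 1)).
  - fold R1 in Hu2. rewrite He2 in Hck2.
    assert (ck ^ 2 <= 2 * R1 ^ (k + 1) * exp 2 * 4 ^ (k + 1)).
    { eapply Rle_trans; [exact Hck2|]. apply Rmult_le_compat_r; [lra|].
      apply Rmult_le_compat_r; [lra|]. lra. }
    assert (1 <= exp 2 * 4 ^ (k + 1) * R1 ^ (k + 1)).
    { replace 1 with (1 * 1 * 1) by ring. repeat apply Rmult_le_compat; lra. }
    nra.
  - apply Rmult_le_compat_r; [lra|]. apply Rmult_le_compat_r; [lra|]. exact H3.
Qed.

Definition Cv n := 2 * QQ n * exp 1 * GG n.

Lemma Cv_ge1 n : 1 <= Cv n.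
Proof.
  unfold Cv. pose proof (QQ_ge1 n). pose proof (GG_ge1 n). pose proof exp1_ge1.
  assert (1 <= 2 * QQ n) by lra.
  assert (1 <= 2 * QQ n * exp 1) by nra. nra.
Qed.

Lemma final_bound n k ck a b t : 0 <= ck -> ck <= QQ n ^ (k + 1) ->
  Rabs (t ^ a * Derive_n (fun t => ck * w n k t) b t) <=
  Cv n ^ (k + a + b + 1) * AA n a * BB n b.
Proof.
  intros H0 Hq.
  eapply Rle_trans; [apply main_bound; auto|].
  set (m := (k + a + b + 1)%nat).
  pose proof (QQ_ge1 n). pose proof (GG_ge1 n). pose proof exp1_ge1.
  assert (HA : 0 <= AA n a) by (left; apply Rpower_pos).
  assert (HB : 0 <= BB n b) by (left; apply Rpower_pos).
  assert (h1 : INR (S k) * 2 ^ b <= 2 ^ m).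
  { apply Rle_trans with (2 ^ k * 2 ^ b).
    - apply Rmult_le_compat_r; [apply pow_le; lra| apply succ_le_pow2].
    - rewrite <- pow_add. apply Rle_pow; [lra| unfold m; lia]. }
  assert (h2 : ck <= QQ n ^ m) by (eapply Rle_trans; [exact Hq| apply Rle_pow; [lra| unfold m; lia]]).
  assert (h3 : exp (INR k) <= exp 1 ^ m).
  { replace (exp (INR k)) with (exp 1 ^ k) by (rewrite exp_pow; f_equal; ring).
    apply Rle_pow; [lra| unfold m; lia]. }
  assert (h4 : GG n ^ (a + b + k + 1) = GG n ^ m) by (f_equal; unfold m; lia).
  rewrite h4.
  replace (Cv n ^ m) with (2 ^ m * QQ n ^ m * exp 1 ^ m * GG n ^ m) by (unfold Cv; rewrite !Rpow_mult_distr; ring).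
  replace (INR (S k) * (2 ^ b * (ck * exp (INR k) * (GG n ^ m * AA n a * BB n b))))
    with ((INR (S k) * 2 ^ b) * ck * exp (INR k) * (GG n ^ m * AA n a * BB n b)) by ring.
  replace (2 ^ m * QQ n ^ m * exp 1 ^ m * GG n ^ m * AA n a * BB n b)
    with (2 ^ m * QQ n ^ m * exp 1 ^ m * (GG n ^ m * AA n a * BB n b)) by ring.
  assert (0 <= GG n ^ m * AA n a * BB n b) by (apply Rmult_le_pos; [apply Rmult_le_pos|]; auto; apply pow_le; lra).
  apply Rmult_le_compat_r; auto.
  pose proof (pos_INR (S k)). pose proof (pow_le 2 b ltac:(lra)). pose proof (exp_pos (INR k)).
  apply Rmult_le_compat; try lra.
  - apply Rmult_le_pos; [apply Rmult_le_pos|]; lra.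
  - apply Rmult_le_compat; try lra. apply Rmult_le_pos; lra.
Qed.

Lemma Rpower_0_l y : Rpower 0 y = 1.
Proof.
  unfold Rpower, ln. case (Rlt_dec 0 0); intro Hr; [exfalso; lra|]. rewrite Rmult_0_r. apply exp_0.
Qed.

Lemma fact_Rpower_le a y : 0 <= y -> Rpower (INR (fact a)) y <= Rpower (INR a) (y * INR a).
Proof.
  intros Hy. destruct a as [|a].
  - simpl. rewrite Rpower_0_l. unfold Rpower. rewrite ln_1, Rmult_0_r, exp_0. lra.
  - assert (0 < INR (S a)) by (apply lt_0_INR; lia).
    rewrite Rmult_comm, <- Rpower_powk by lra.
    apply Rle_Rpower_l; auto. split; [apply INR_fact_lt_0|]. apply fact_le_pow. lra.
Qed.

Theorem theorem5p1 (n : nat) (c : nat -> R)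
  (hc_pos : forall k, 0 < c k)
  (hc_norm : forall k,
     is_RInt_gen (fun t => (t ^ n * (c k * w n k t)) ^ 2)
       (Rbar_locally m_infty) (Rbar_locally p_infty) 1) :
  let v := fun (k : nat) (t : R) => c k * w n k t in
  (forall k, GelfandShilov (1 / (2 * INR n + 2)) ((2 * INR n + 1) / (2 * INR n + 2)) (v k)) /\
  exists Cv : R, 0 < Cv /\
    forall (k a b : nat) (t : R),
      Rabs (t ^ a * Derive_n (v k) b t) <=
      Cv ^ (k + a + b + 1) * Rpower (INR (fact a)) (1 / (2 * INR n + 2))
        * Rpower (INR (fact b)) ((2 * INR n + 1) / (2 * INR n + 2)).
Proof.
  intros v.
  assert (Hfb : forall k a b t, Rabs (t ^ a * Derive_n (v k) b t) <= Cv n ^ (k + a + b + 1) * AA n a * BB n b).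
  { intros k a b t. unfold v. apply final_bound; [left; apply hc_pos|].
    apply ck_bound; auto. }
  pose proof (Cv_ge1 n) as HC.
  pose proof (pos_INR n) as Hn.
  split.
  - intros k. split.
    + intros q t. apply (ex_derive_n_ext (evL n (L0 n k (c k)))).
      { intros; unfold v; symmetry; apply w_evL. }
      apply ex_derive_n_evL.
    + exists (Cv n ^ (k + 1)), (Cv n), (Cv n).
      split; [apply pow_lt; lra|]. split; [lra|]. split; [lra|].
      intros a q t. eapply Rle_trans; [apply Hfb|].
      replace (Cv n ^ (k + a + q + 1)) with (Cv n ^ (k + 1) * Cv n ^ a * Cv n ^ q)
        by (rewrite <- !pow_add; f_equal; lia).
      assert (0 < Cv n ^ (k + 1) * Cv n ^ a * Cv n ^ q)
        by (apply Rmult_lt_0_compat; [apply Rmult_lt_0_compat|]; apply pow_lt; lra).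
      assert (HA : AA n a <= Rpower (INR a) (1 / (2 * INR n + 2) * INR a)).
      { apply fact_Rpower_le. apply Rlt_le, Rdiv_lt_0_compat; lra. }
      assert (HB : BB n q <= Rpower (INR q) ((2 * INR n + 1) / (2 * INR n + 2) * INR q)).
      { apply fact_Rpower_le. apply Rlt_le, Rdiv_lt_0_compat; lra. }
      rewrite Rmult_assoc, (Rmult_assoc (Cv n ^ (k + 1) * Cv n ^ a * Cv n ^ q)).
      apply Rmult_le_compat_l; [lra|].
      apply Rmult_le_compat; auto; left; apply Rpower_pos.
  - exists (Cv n). split; [lra|]. exact Hfb.
Qed.
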